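(* $\Omega(\log\log n)$ bits of advice are required for a deterministic online algorithm to achieve an asymptotic approximation ratio greater than $1/2$ for online one-sided bipartite matching, even when the algorithm is given $n$ in advance. More precisely, no online algorithm using $\log\log n-\log\log\log n$ bits of advice (and knowing $n$) achieves an asymptotic approximation ratio greater than $1/2$.
   Context: Online one-sided bipartite matching: offline vertices are known in advance; $n$ online vertices arrive one at a time in adversarial order, each with its set of offline neighbours, and must be irrevocably matched to an unmatched neighbour or left unmatched; the goal is a maximum-size matching. An online algorithm with $b$ bits of advice may read a binary advice string of length $b$ written before the input is processed by an oracle that knows the whole input and has unbounded computational power. The asymptotic approximation ratio of $\mathbb{A}$ is $\liminf_{n}\inf_{I\in\mathcal{I}_n} v(\mathbb{A},I)/v(I)$, with $v(I)$ the maximum matching size. *)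

(* Defs.v *)
From Stdlib Require Import Reals.
From mathcomp Require Import all_boot.
Set Implicit Arguments. Unset Strict Implicit. Unset Printing Implicit Defensive.

(* ---------- Instances ----------
   An instance is given by m (the number of offline vertices, named 0..m-1,
   known in advance) and adj : seq (seq nat), the neighbour sets of the
   n = size adj online vertices in arrival order.  Each neighbour set is
   represented canonically as a strictly increasing list of offline vertices. *)
Definition wf_instance (m : nat) (adj : seq (seq nat)) : bool :=
  all (fun s => sorted ltn s && all (fun u => u < m) s) adj.

Definition is_matching (m : nat) (adj : seq (seq nat))
  (f : {ffun 'I_(size adj) -> option 'I_m}) : bool :=
  [forall i, if f i is Some u then val u \in nth [::] adj i else true] &&
  [forall i, forall j, ((f i != None) && (f i == f j)) ==> (i == j)].

Definition matching_size m (adj : seq (seq nat))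
  (f : {ffun 'I_(size adj) -> option 'I_m}) : nat :=
  #|[pred i | f i != None]|.

Definition opt (m : nat) (adj : seq (seq nat)) : nat :=
  \max_(f : {ffun 'I_(size adj) -> option 'I_m} | is_matching f)
     matching_size f.

(* ---------- Deterministic online algorithms with advice ----------
   On arrival of an online vertex, the algorithm decides using: n (given in
   advance), m (offline vertices known in advance), the advice string, the
   neighbour sets of the previously arrived online vertices (its own past
   decisions are a deterministic function of these), and the neighbour set
   of the current vertex.  An answer that is not an unmatched neighbour is
   treated as "leave unmatched"; this loses no generality, since every valid
   algorithm is represented and every representable one is valid. *)
Definition online_alg : Type :=
  nat -> nat -> seq bool -> seq (seq nat) -> seq nat -> option nat.

Fixpoint run_aux (A : online_alg) (n m : nat) (adv : seq bool)
  (past : seq (seq nat)) (matched : seq nat) (rest : seq (seq nat)) : nat :=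
  match rest with
  | [::] => 0
  | cur :: rest' =>
      match A n m adv past cur with
      | Some u =>
          if (u \in cur) && (u \notin matched)
          then (run_aux A n m adv (rcons past cur) (u :: matched) rest').+1
          else run_aux A n m adv (rcons past cur) matched rest'
      | None => run_aux A n m adv (rcons past cur) matched rest'
      end
  end.

Definition run (A : online_alg) (m : nat) (adv : seq bool)
  (adj : seq (seq nat)) : nat :=
  run_aux A (size adj) m adv [::] [::] adj.

Definition lg (x : R) : R := Rdiv (ln x) (ln (INR 2)).

(* the advice budget: floor(log log n - log log log n) bits (0 if negative) *)
Definition adv_bits (n : nat) : nat :=
  Z.to_nat (Int_part (Rminus (lg (lg (INR n))) (lg (lg (lg (INR n)))))).

(* v(A,I): the oracle (knowing the whole input) writes the best advice string
   of length adv_bits n. *)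
Definition alg_value (A : online_alg) (m : nat) (adj : seq (seq nat)) : nat :=
  \max_(w : (adv_bits (size adj)).-tuple bool) run A m (tval w) adj.

(* The asymptotic approximation ratio
     liminf_n inf_{I in I_n} v(A,I)/v(I)
   is strictly greater than c, written out:
   there are c' > c and N such that for all n >= N and all instances I with
   n online vertices (and v(I) > 0), v(A,I) >= c' * v(I). *)
Definition asym_ratio_gt (A : online_alg) (c : R) : Prop :=
  exists c' : R, Rlt c c' /\
  exists N : nat, forall n : nat, N <= n ->
    forall (m : nat) (adj : seq (seq nat)),
      wf_instance m adj -> size adj = n -> 0 < opt m adj ->
      Rle (Rmult c' (INR (opt m adj))) (INR (alg_value A m adj)).

(* Main.v *)
Require Import Defs.
From Stdlib Require Import Reals Lra ZArith.
From mathcomp Require Import all_boot zify.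
Set Implicit Arguments. Unset Strict Implicit. Unset Printing Implicit Defensive.

Definition step1 (A : online_alg) (n m : nat) (adv : seq bool)
  (st : seq (seq nat) * seq nat * nat) (cur : seq nat) :=
  let: (past, mt, c) := st in
  match A n m adv past cur with
  | Some u => if (u \in cur) && (u \notin mt) then (rcons past cur, u :: mt, c.+1)
              else (rcons past cur, mt, c)
  | None => (rcons past cur, mt, c)
  end.

Lemma run_aux_fold A n m adv past mt c rest :
  c + run_aux A n m adv past mt rest = (foldl (step1 A n m adv) (past, mt, c) rest).2.
Proof.
elim: rest past mt c => [|cur rest IH] past mt c /=; first by rewrite addn0.
case: (A n m adv past cur) => [u|]; last exact: IH.
case: ifP => _; last exact: IH.
by rewrite addnS -IH.
Qed.

Lemma fold_past A n m adv past mt c rest :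
  (foldl (step1 A n m adv) (past, mt, c) rest).1.1 = past ++ rest.
Proof.
elim: rest past mt c => [|cur rest IH] past mt c /=; first by rewrite cats0.
case: (A n m adv past cur) => [u|]; last by rewrite IH cat_rcons.
by case: ifP => _; rewrite IH cat_rcons.
Qed.

Definition stt (A : online_alg) (n m : nat) (adv : seq bool) (p : seq (seq nat)) := foldl (step1 A n m adv) ([::], [::], 0) p.
Definition mtc (A : online_alg) (n m : nat) (adv : seq bool) (p : seq (seq nat)) := (stt A n m adv p).1.2.
Definition cnt (A : online_alg) (n m : nat) (adv : seq bool) (p : seq (seq nat)) := (stt A n m adv p).2.

Lemma run_cnt A m adv adj : run A m adv adj = cnt A (size adj) m adv adj.
Proof. by rewrite /run /cnt /stt -run_aux_fold. Qed.

Lemma stt_past A n m adv p : (stt A n m adv p).1.1 = p.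
Proof. by rewrite /stt fold_past. Qed.

Lemma stt_rcons A n m adv p S : stt A n m adv (rcons p S) =
  match A n m adv p S with
  | Some u => if (u \in S) && (u \notin mtc A n m adv p)
      then (rcons p S, u :: mtc A n m adv p, (cnt A n m adv p).+1)
      else (rcons p S, mtc A n m adv p, cnt A n m adv p)
  | None => (rcons p S, mtc A n m adv p, cnt A n m adv p) end.
Proof.
rewrite /stt foldl_rcons -/(stt A n m adv p) /mtc /cnt.
have := stt_past A n m adv p.
by case: (stt A n m adv p) => [[past mt] c] /= ->.
Qed.

Definition TT n := (adv_bits n).-tuple bool.
Definition qq n := #|{: TT n}|.
Definition prof (A : online_alg) (n m : nat) (p : seq (seq nat)) (x : nat) : {ffun TT n -> bool} :=
  [ffun t : TT n => x \notin mtc A n m (tval t) p].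
Definition RemS m (O : seq nat) := [seq x <- iota 0 m | x \notin O].
Definition cls (A : online_alg) (n m : nat) (p : seq (seq nat)) (O : seq nat) (x : nat) := [seq y <- RemS m O | prof A n m p y == prof A n m p x].
Definition nextS (A : online_alg) (n m : nat) (p : seq (seq nat)) (O : seq nat) :=
  let R := RemS m O in
  let x0 := nth 0 R (find (fun x => qq n < size (cls A n m p O x)) R) in
  take (qq n).+1 (cls A n m p O x0).
Definition picked (A : online_alg) (n m : nat) (p : seq (seq nat)) (S : seq nat) (y : nat) :=
  [exists t : TT n, A n m (tval t) p S == Some y].
Definition nextO (A : online_alg) (n m : nat) (p : seq (seq nat)) (S : seq nat) := nth 0 S (find (fun y => ~~ picked A n m p S y) S).
Fixpoint build (A : online_alg) (n m t : nat) : seq (seq nat) * seq nat :=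
  match t with
  | 0 => ([::], [::])
  | t'.+1 => let pr := build A n m t' in
     let S := nextS A n m pr.1 pr.2 in
     (rcons pr.1 S, rcons pr.2 (nextO A n m pr.1 S))
  end.

Definition free_cnt m (O mt : seq nat) :=
  count (fun x => (x \notin O) && (x \notin mt)) (iota 0 m).

Lemma my_count_rem (s : seq nat) (P : pred nat) a : uniq s -> a \in s -> P a ->
  count P s = (count (fun x => P x && (x != a)) s).+1.
Proof.
elim: s => [|y s IH] //= /andP [ys us]; rewrite in_cons => /orP [/eqP ay|as_] Pa.
  subst a.
  rewrite Pa eqxx /= add1n add0n; congr S.
  apply: eq_in_count => x xs.
  have xy : x != y by apply: contraNneq ys => <-.
  by rewrite xy andbT.
rewrite (IH us as_ Pa) addnS; congr S.
have -> : y != a by apply: contraNneq ys => ->.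
by rewrite andbT.
Qed.

Lemma pigeon (T : finType) (R : seq nat) (f : nat -> T) q :
  (forall x, x \in R -> count (fun y => f y == f x) R <= q) ->
  size R <= q * #|T|.
Proof.
move=> H.
have -> : size R = \sum_(P : T) count (fun y => f y == P) R.
  elim: R {H} => [|x R IH] /=; first by rewrite big1.
  rewrite big_split /= -IH -addn1 addnC; congr (_ + _).
  rewrite (bigD1 (f x)) //= eqxx big1 // => P /negbTE.
  by rewrite eq_sym => ->.
rewrite mulnC -sum_nat_const; apply: leq_sum => P _.
case: (boolP (has (fun y => f y == P) R)) => [/hasP [x xR /eqP <-]|].
  exact: H.
by rewrite has_count lt0n negbK => /eqP ->.
Qed.

Lemma size_Rset m O : m - size O <= size (RemS m O).
Proof.
rewrite /RemS size_filter.
have E := count_predC (fun x => x \in O) (iota 0 m).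
rewrite size_iota in E.
have H : count (fun x => x \in O) (iota 0 m) <= size O.
  rewrite -size_filter; apply: uniq_leq_size; first by rewrite filter_uniq // iota_uniq.
  by move=> x; rewrite mem_filter => /andP [].
have -> : count (fun x => x \notin O) (iota 0 m) = count (predC (fun x => x \in O)) (iota 0 m) by [].
move: E H; set c1 := count _ _; set c2 := count _ _ => E H.
rewrite -E; apply: (@leq_trans (c1 + c2 - c1)); first by apply: leq_sub2l.
by rewrite addKn.
Qed.

Lemma sorted_RemS m O : sorted ltn (RemS m O).
Proof. apply: sorted_filter; [exact: ltn_trans | exact: iota_ltn_sorted]. Qed.

Lemma nextS_spec A n m p O :
  qq n * 2 ^ qq n < size (RemS m O) ->
  let S := nextS A n m p O in
  [/\ sorted ltn S, size S = (qq n).+1,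
      (forall y, y \in S -> (y < m) && (y \notin O)) &
      (forall y z, y \in S -> z \in S -> prof A n m p y = prof A n m p z)].
Proof.
move=> Hs S.
set R := RemS m O.
have Hh : has (fun x => qq n < size (cls A n m p O x)) R.
  apply/negPn/negP => /hasPn H.
  have : size R <= qq n * #|{ffun TT n -> bool}|.
    apply: (pigeon (f := prof A n m p)) => x xR.
    by have := H x xR; rewrite /cls size_filter -leqNgt.
  by rewrite card_ffun card_bool -/(qq n) leqNgt Hs.
pose x0 := nth 0 R (find (fun x => qq n < size (cls A n m p O x)) R).
have Hx0 : qq n < size (cls A n m p O x0) by exact: (nth_find 0 Hh).
have HS : S = take (qq n).+1 (cls A n m p O x0) by [].
have Hmem : forall y, y \in S -> (prof A n m p y == prof A n m p x0) && (y \in R).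
  by move=> y; rewrite HS => /mem_take; rewrite mem_filter.
split.
- rewrite HS; apply: take_sorted; apply: sorted_filter; first exact: ltn_trans.
  exact: sorted_RemS.
- by rewrite HS size_takel.
- move=> y /Hmem /andP [_]; rewrite mem_filter mem_iota add0n => /andP [-> /andP [_ ->]].
  done.
- move=> y z /Hmem /andP [/eqP -> _] /Hmem /andP [/eqP -> _] //.
Qed.

Lemma nextO_spec A n m p S :
  uniq S -> size S = (qq n).+1 ->
  let o := nextO A n m p S in o \in S /\ ~~ picked A n m p S o.
Proof.
move=> uS sS o.
have Hh : has (fun y => ~~ picked A n m p S y) S.
  apply/negPn/negP => /hasPn H.
  have : size S <= size (pmap (fun t : TT n => A n m (tval t) p S) (enum {: TT n})).
    apply: uniq_leq_size => // y yS.
    have := H y yS; rewrite negbK => /existsP [t /eqP Ht].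
    by rewrite mem_pmap; apply/mapP; exists t; rewrite ?mem_enum.
  rewrite size_pmap sS => /leq_trans /(_ (count_size _ _)).
  by rewrite -cardE ltnn.
split; first by rewrite /o /nextO mem_nth // -has_find.
exact: (nth_find 0 Hh).
Qed.

Definition Inv (A : online_alg) (n m t : nat) (pr : seq (seq nat) * seq nat) :=
 [/\ size pr.1 = t, size pr.2 = t, uniq pr.2 && all (fun x => x < m) pr.2,
   (forall i, i < t -> nth 0 pr.2 i \in nth [::] pr.1 i) /\
   wf_instance m pr.1 &
   (forall tau : TT n, 2 * cnt A n m (tval tau) pr.1 +
        free_cnt m pr.2 (mtc A n m (tval tau) pr.1) <= m)].

Lemma Inv0 A n m : Inv A n m 0 ([::], [::]).
Proof.
split=> //= tau.
rewrite /cnt /mtc /stt /= muln0 add0n /free_cnt.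
by rewrite (eq_count (a2 := predT)) // count_predT size_iota.
Qed.

Lemma Inv_step A n m t pr : Inv A n m t pr ->
  qq n * 2 ^ qq n < size (RemS m pr.2) ->
  Inv A n m t.+1 (rcons pr.1 (nextS A n m pr.1 pr.2),
                  rcons pr.2 (nextO A n m pr.1 (nextS A n m pr.1 pr.2))).
Proof.
case: pr => p O [/= sp sO /andP [uO aO] [hO wf] pot] Hs.
have [sortS sizeS memS profS] := nextS_spec A p Hs.
set S := nextS A n m p O in sortS sizeS memS profS *.
have uS : uniq S by apply: (sorted_uniq ltn_trans ltnn) sortS.
have [oS npo] := nextO_spec A m p uS sizeS.
set o := nextO A n m p S in oS npo *.
have /andP [om oO] := memS o oS.
split => /=.
- by rewrite size_rcons sp.
- by rewrite size_rcons sO.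
- by rewrite rcons_uniq oO uO all_rcons om aO.
split.
- move=> i; rewrite ltnS leq_eqVlt => /orP [/eqP ->|ilt].
    by rewrite nth_rcons sO ltnn eqxx nth_rcons sp ltnn eqxx.
  by rewrite !nth_rcons sO sp ilt hO.
- move: wf; rewrite /wf_instance all_rcons => -> ; rewrite andbT sortS /=.
  by apply/allP => y /memS /andP [].
- move=> tau.
  have Hpot := pot tau.
  have nonpick : free_cnt m (rcons O o) (mtc A n m (tval tau) p) <=
                 free_cnt m O (mtc A n m (tval tau) p).
    by apply: sub_count => x /=; rewrite mem_rcons in_cons negb_or => /andP [/andP [_ ->] ->].
  rewrite {1}/cnt {1}/mtc stt_rcons.
  case Ha: (A n m (tval tau) p S) => [u|] /=; last first.
    by apply: leq_trans Hpot; rewrite leq_add2l.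
  case: ifP => [/andP [uS' umt]|_] /=; last first.
    by apply: leq_trans Hpot; rewrite leq_add2l.
  set mt := mtc A n m tau p in Hpot nonpick umt *.
  have uo : u != o.
    apply: contraNneq npo => <-; apply/existsP; exists tau; by rewrite Ha.
  have omt : o \notin mt.
    have H := profS o u oS uS'.
    have := congr1 (fun f : {ffun TT n -> bool} => f tau) H; rewrite /prof !ffunE /= => ->.
    exact: umt.
  have /andP [um _] := memS u uS'.
  have /andP [_ uO'] := memS u uS'.
  have E1 := @my_count_rem (iota 0 m) (fun x => (x \notin O) && (x \notin mt)) u (iota_uniq 0 m).
  rewrite mem_iota add0n um /= uO' umt in E1.
  have E2 := @my_count_rem (iota 0 m) (fun x => (x \notin O) && (x \notin mt) && (x != u)) o (iota_uniq 0 m).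
  rewrite mem_iota add0n om /= oO omt eq_sym uo in E2.
  have E3 : free_cnt m O mt = (free_cnt m (rcons O o) (u :: mt)).+2.
    rewrite /free_cnt (E1 isT isT) (E2 isT isT); congr (_.+2).
    apply: eq_count => x /=; rewrite mem_rcons !in_cons !negb_or.
    by case: (x \in O); case: (x \in mt); case: (x == o); case: (x == u).
  move: Hpot; rewrite E3; lia.
Qed.

Definition KK n := qq n * 2 ^ qq n.

Lemma Inv_build A n t : t <= n -> Inv A n (n + KK n) t (build A n (n + KK n) t).
Proof.
elim: t => [|t IH] tn /=; first exact: Inv0.
have I := IH (ltnW tn).
apply: Inv_step => //.
case: I => _ sO _ _ _.
apply: leq_trans (size_Rset _ _); rewrite sO /KK; lia.
Qed.

Lemma main_inst A n : 0 < n -> exists (m : nat) (adj : seq (seq nat)),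
  [/\ wf_instance m adj, size adj = n, n <= opt m adj &
      2 * alg_value A m adj <= n + KK n].
Proof.
move=> n0.
have [sp sO /andP [uO aO] [hO wf] pot] := Inv_build A (leqnn n).
set m := n + KK n in sp sO uO aO hO wf pot *.
set pr := build A n m n in sp sO uO aO hO wf pot *.
exists m, pr.1; split => //.
- pose f : {ffun 'I_(size pr.1) -> option 'I_m} :=
    [ffun i : 'I_(size pr.1) => (insub (nth 0 pr.2 i) : option 'I_m)].
  have Hi : forall i : 'I_(size pr.1), nth 0 pr.2 i < m.
    move=> i; apply: (allP aO); apply: mem_nth; rewrite sO -sp; exact: ltn_ord.
  have fS : forall i, f i = Some (Ordinal (Hi i)).
    move=> i; rewrite ffunE; case: insubP => [u _ uv|]; last by rewrite Hi.
    by congr Some; apply: val_inj; rewrite /= uv.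
  have Hm : is_matching f.
    apply/andP; split.
      apply/forallP => i; rewrite fS /=; apply: hO; rewrite -sp; exact: ltn_ord.
    apply/forallP => i; apply/forallP => j; apply/implyP => /andP [_].
    rewrite !fS => /eqP [] /eqP; rewrite nth_uniq ?sO -?sp ?ltn_ord //.
  rewrite /opt; apply: (leq_trans _ (@leq_bigmax_cond _ _ (@matching_size m pr.1) f Hm)).
  rewrite /matching_size.
  have -> : #|[pred i | f i != None]| = #|'I_(size pr.1)|.
    by apply: eq_card => i; rewrite inE fS.
  by rewrite card_ord sp.
- have H : alg_value A m pr.1 <= m %/ 2.
    rewrite /alg_value; apply/bigmax_leqP => w _.
    have Hw : size (tval w) == adv_bits n by rewrite size_tuple sp.
    pose tau : TT n := Tuple Hw.
    have -> : run A m (tval w) pr.1 = run A m (tval tau) pr.1 by [].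
    have := pot tau; rewrite run_cnt sp /=.
    lia.
  rewrite -/m; lia.
Qed.

Lemma INR_exp2 k : INR (2 ^ k) = pow (INR 2) k.
Proof.
elim: k => [|k IH]; first by [].
by rewrite expnS mult_INR IH.
Qed.

Lemma ln2_pos : Rlt 0 (ln (INR 2)).
Proof. rewrite -ln_1; apply: ln_increasing; simpl; lra. Qed.

Lemma lg_exp2 k : lg (INR (2 ^ k)) = INR k.
Proof.
rewrite /lg INR_exp2 ln_pow; last (simpl; lra).
have H := ln2_pos.
field; lra.
Qed.

Lemma Int_part_INR k : Int_part (INR k) = Z.of_nat k.
Proof.
rewrite INR_IZR_INZ; symmetry; apply: Int_part_spec; lra.
Qed.

Lemma adv_bits_exp i : adv_bits (2 ^ (2 ^ (2 ^ i))) = 2 ^ i - i.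
Proof.
rewrite /adv_bits !lg_exp2 -minus_INR; last first.
  by apply/leP; apply: ltnW; apply: ltn_expl.
rewrite Int_part_INR Nat2Z.id.
by [].
Qed.

Lemma two_x x : 4 <= x -> 2 * x <= 2 ^ x.-1.
Proof.
elim: x => [|x IH] //; rewrite leq_eqVlt => /orP [/eqP <- //|].
rewrite ltnS => x4; have H := IH x4.
have -> : x.+1.-1 = x.-1.+1 by lia.
rewrite expnS; lia.
Qed.

Lemma KK_bound i D : 2 <= i -> D <= i ->
  KK (2 ^ (2 ^ (2 ^ i))) * D <= 2 ^ (2 ^ (2 ^ i)).
Proof.
move=> i2 Di.
rewrite /KK /qq card_tuple card_bool adv_bits_exp.
set j := 2 ^ i.
have j4 : 4 <= j by rewrite /j (_ : 4 = 2 ^ 2) // leq_exp2l.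
have ij : i < j by apply: ltn_expl.
set h := j.-1.
have hj : j = h.+1 by rewrite /h prednK // (leq_trans _ j4).
have qh : 2 ^ (j - i) <= 2 ^ h by rewrite leq_exp2l //; lia.
have Dj : D <= 2 ^ j by apply: leq_trans (ltnW (ltn_expl _ (ltnSn 1))); lia.
have q2 : 2 ^ 2 ^ (j - i) <= 2 ^ 2 ^ h by rewrite leq_exp2l.
have qj : 2 ^ (j - i) <= 2 ^ j by rewrite leq_exp2l //; lia.
apply: (@leq_trans (2 ^ j * 2 ^ 2 ^ h * 2 ^ j)).
  by rewrite leq_mul // leq_mul.
rewrite -!expnD leq_exp2l //.
have := two_x j4; rewrite -/h hj expnS; lia.
Qed.

Local Open Scope R_scope.
Lemma real_final (c a n o k d : R) :
  INR 1 / INR 2 < c -> / d < 2 * c - 1 -> 0 < d -> 0 < n ->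
  2 * a <= n + k -> n <= o -> k * d <= n -> c * o <= a -> False.
Proof.
simpl INR => Hc Hd d0 n0 Ha Ho Hk Hf.
have E : k = k * d * / d by field; lra.
have Hk2 : k <= n * / d.
  rewrite E; apply: Rmult_le_compat_r => //; apply: Rlt_le; exact: Rinv_0_lt_compat.
have Hk3 : n * / d < n * (2 * c - 1) by apply: Rmult_lt_compat_l.
nra.
Qed.
Lemma c_pos (c : R) : INR 1 / INR 2 < c -> 0 < 2 * c - 1.
Proof. simpl INR; lra. Qed.
Lemma dbl (a : nat) : 2 * INR a = INR (Nat.mul 2 a).
Proof. rewrite mult_INR; simpl; ring. Qed.
Local Close Scope R_scope.

Theorem corollary2 (A : online_alg) : ~ asym_ratio_gt A (Rdiv (INR 1) (INR 2)).
Proof.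
move=> [c [Hc [N HN]]].
have [D [HD D0]] := archimed_cor1 _ (c_pos Hc).
move/ltP: D0 => D0.
pose i := N + D + 2.
pose n := 2 ^ (2 ^ (2 ^ i)).
have iN : N <= n.
  apply: (@leq_trans (2 ^ i)); first by apply: ltnW; apply: (leq_trans _ (ltn_expl _ (ltnSn 1))); rewrite /i; lia.
  apply: (@leq_trans (2 ^ (2 ^ i))); apply: ltnW; apply: ltn_expl => //.
have n0 : 0 < n by rewrite /n expn_gt0.
have KB := @KK_bound i D (ltac:(rewrite /i; lia)) (ltac:(rewrite /i; lia)).
rewrite -/n in KB.
have [m [adj [wf sz on alg]]] := main_inst A n0.
have opt0 : 0 < opt m adj by apply: leq_trans on.
have Hf := HN n iN m adj wf sz opt0.
apply: (@real_final c (INR (alg_value A m adj)) (INR n) (INR (opt m adj)) (INR (KK n)) (INR D) Hc HD _ _ _ _ _ Hf).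
- by apply: lt_0_INR; exact/ltP.
- by apply: lt_0_INR; exact/ltP.
- rewrite -plus_INR dbl; apply: le_INR; exact/leP.
- by apply: le_INR; exact/leP.
- by rewrite -mult_INR; apply: le_INR; exact/leP.
Qed.
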